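(* Let $\Gamma$ be an $n$-dimensional Bieberbach group with cyclic holonomy group $G$ of square-free order $\delta$ and translation subgroup $M$. Then $M=M_{n-1}\oplus\mathbb{Z}$ as $\mathbb{Z}G$-modules, where $\mathbb{Z}$ is a trivial $\mathbb{Z}G$-module generated by the $\delta$-th power of some element $c\in\Gamma$, and $\Gamma=M_{n-1}\rtimes C$ with $C=\langle c\rangle$.
   Context: An $n$-dimensional Bieberbach group is a torsion-free group $\Gamma$ with a normal maximal abelian subgroup $M\cong\mathbb{Z}^n$ of finite index; $G=\Gamma/M$ is the holonomy group, acting faithfully on $M$ by conjugation. *)

(* Defs.v *)
(* Bieberbach groups are infinite, so the ambient group is an
   arbitrary (possibly infinite) MathComp [groupType] (boot/monoid.v), and
   subgroups are Prop-valued predicates on it. *)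
From HB Require Import structures.
From mathcomp Require Import all_boot all_order all_algebra.
Set Implicit Arguments.
Unset Strict Implicit.
Unset Printing Implicit Defensive.
Import GRing.Theory.

Local Open Scope group_scope.

Section BieberbachDefs.
Variable G : groupType.

Definition zpow (x : G) (k : int) : G :=
  match k with
  | Posz n => x ^+ n
  | Negz n => (x ^+ n.+1)^-1
  end.

Definition cyc (x : G) : G -> Prop := fun y => exists k : int, y = zpow x k.

Definition is_subgroup (H : G -> Prop) : Prop :=
  [/\ H 1, (forall x y, H x -> H y -> H (x * y)) & (forall x, H x -> H x^-1)].

Definition normal_sub (H : G -> Prop) : Prop :=
  forall x g, H x -> H (x ^ g).

Definition abelian_sub (H : G -> Prop) : Prop :=
  forall x y, H x -> H y -> x * y = y * x.

Definition max_abelian_sub (H : G -> Prop) : Prop :=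
  [/\ is_subgroup H, abelian_sub H &
      forall K, is_subgroup K -> abelian_sub K -> (forall x, H x -> K x) ->
        forall x, K x -> H x].

Definition free_abelian_rank (H : G -> Prop) (n : nat) : Prop :=
  exists f : 'rV[int]_n -> G,
    [/\ forall u v, f (u + v)%R = f u * f v,
        injective f &
        forall x, H x <-> exists u, x = f u].

Definition torsion_free : Prop :=
  forall (x : G) (k : nat), (0 < k)%N -> x ^+ k = 1 -> x = 1.

Definition finite_index (H : G -> Prop) : Prop :=
  exists s : seq G, forall x, exists2 y, y \in s & H (y^-1 * x).

(* Gamma (= the whole group G) is an n-dimensional Bieberbach group with
   translation subgroup M *)
Definition bieberbach (n : nat) (M : G -> Prop) : Prop :=
  [/\ torsion_free, max_abelian_sub M, normal_sub M,
      free_abelian_rank M n & finite_index M].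

(* the holonomy group G/M is cyclic of order d *)
Definition cyclic_holonomy_of_order (M : G -> Prop) (d : nat) : Prop :=
  (0 < d)%N /\
  exists g : G,
    [/\ M (g ^+ d),
        (forall k, (0 < k < d)%N -> ~ M (g ^+ k)) &
        forall x, exists k : nat, M ((g ^+ k)^-1 * x)].

End BieberbachDefs.

Definition squarefree (d : nat) : Prop :=
  forall p : nat, prime p -> ~~ (p * p %| d)%N.

(* Main.v *)
Require Import Defs.
From HB Require Import structures.
From mathcomp Require Import all_boot all_order all_algebra.
From Stdlib Require Import ClassicalEpsilon Classical.
From mathcomp Require Import ring.
Import GRing.Theory Num.Theory.
Set Implicit Arguments.
Unset Strict Implicit.
Unset Printing Implicit Defensive.

Open Scope ring_scope.

Lemma tate n (C : 'M[int]_n) (p : nat) (x : 'rV[int]_n) :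
  (0 < p)%N -> C ^+ p = 1 -> x *m C = x ->
  (forall y : 'cV[int]_n, C *m y = y -> (p%:Z %| (x *m y) ord0 ord0)%Z) ->
  exists w : 'rV[int]_n, x = w *m \sum_(i < p) C ^+ i.
Proof.
move=> p0 Cp xC hy.
set Nc := \sum_(i < p) C ^+ i.
have [L Lu [R Ru [d _ BE]]] := int_Smith_normal_form (1%:M - C).
set D := \matrix_(i, j) _ in BE.
have BN : (1%:M - C) *m Nc = 0.
  rewrite idmxE mulmxE -opprB mulNr -subrX1 Cp subrr oppr0 //.
have DRN : D *m (R *m Nc) = 0.
  have : invmx L *m ((1%:M - C) *m Nc) = 0 by rewrite BN mulmx0.
  rewrite BE -!mulmxA (mulmxA (invmx L)) mulVmx // mul1mx; done.
have xN : x *m Nc = p%:Z *: x.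
  rewrite /Nc mulmx_sumr.
  have xCi i : x *m C ^+ i = x.
    elim: i => [|i IH]; first by rewrite expr0 -idmxE mulmx1.
    by rewrite exprS -mulmxE mulmxA xC IH.
  under eq_bigr => i _ do rewrite xCi.
  by rewrite sumr_const card_ord -natz scaler_nat.
set z := x *m invmx R.
have hz (j : 'I_n) : d`_j = 0 -> (p%:Z %| z ord0 j)%Z.
  move=> dj; set y := invmx R *m delta_mx j (ord0 : 'I_1).
  have Cy : C *m y = y.
    suff : (1%:M - C) *m y = 0.
      by rewrite mulmxBl mul1mx => /eqP; rewrite subr_eq0 => /eqP <-.
    rewrite BE /y -!mulmxA (mulmxA R) mulmxV // mul1mx.
    have -> : D *m delta_mx j (ord0 : 'I_1) = 0.
      apply/matrixP => i k; rewrite !mxE (bigD1 j) //= big1.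
        rewrite !mxE !eqxx /= (ord1 k) eqxx mulr1 addr0; have [->|ne] := eqVneq i j; first by rewrite eqxx dj mul0rn.
        by rewrite (_ : (i == j :> nat) = false) ?mulr0n //; exact: negbTE ne.
      by move=> i' /negbTE ne; rewrite !mxE ne mulr0.
    by rewrite mulmx0.
  have := hy y Cy; rewrite /y mulmxA -/z.
  rewrite !mxE (bigD1 j) //= big1 ?mxE ?eqxx ?mulr1 ?addr0 // => i ne.
  by rewrite [delta_mx _ _ _ _]mxE (negbTE ne) mulr0.
set w' := \row_j (if d`_j == 0 then (z ord0 j %/ p%:Z)%Z else 0).
have key : (z - p%:Z *: w') *m (R *m Nc) = 0.
  rewrite mulmx_sum_row big1 // => j _.
  have -> : (z - p%:Z *: w') 0 j = z ord0 j - p%:Z * w' ord0 j by rewrite !mxE.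
  rewrite [w' _ _]mxE; case: eqP => dj.
    by rewrite mulrC divzK ?subrr ?scale0r //; exact: hz j dj.
  suff -> : row j (R *m Nc) = 0 by rewrite scaler0.
  apply/rowP => k; rewrite mxE [RHS]mxE.
  have := congr1 (fun A : 'M_n => A j k) DRN; rewrite [RHS]mxE mxE (bigD1 j) //= big1.
    rewrite [D j j]mxE eqxx mulr1n addr0 => /eqP; rewrite mulf_eq0 (negbTE (introN eqP dj)) /=.
    by move/eqP.
  by move=> i ne; rewrite [D j i]mxE (_ : (j == i :> nat) = false) ?mulr0n ?mul0r //; apply/negbTE; rewrite eq_sym.
exists (w' *m R).
have hx : x = z *m R by rewrite /z -mulmxA mulVmx ?mulmx1.
have : p%:Z *: x = p%:Z *: (w' *m R *m Nc).
  rewrite -xN {1}hx -mulmxA.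
  move/eqP: key; rewrite mulmxBl subr_eq0 => /eqP ->.
  by rewrite -scalemxAl mulmxA.
move/rowP => E; apply/rowP => k; have := E k; rewrite [LHS]mxE [RHS]mxE.
move/eqP; rewrite -subr_eq0 -mulrBr mulf_eq0 => /orP [|].
  by move/eqP => [] p00; rewrite p00 in p0.
by rewrite subr_eq0 => /eqP.
Qed.

Lemma additive_mx n m (h : 'rV[int]_n -> 'rV[int]_m) :
  (forall u v, h (u + v) = h u + h v) ->
  forall u, h u = u *m \matrix_(i, j) h (delta_mx 0 i) 0 j.
Proof.
move=> hD.
have h0 : h 0 = 0 by apply/eqP; rewrite -(addrI (h 0) (_ : h 0 + h 0 = h 0 + 0)) // addr0 -hD addr0.
have hN u : h (- u) = - h u by apply/eqP; rewrite -addr_eq0 -hD addNr h0.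
have hMn u k : h (u *+ k) = h u *+ k.
  by elim: k => [|k IH]; rewrite ?mulr0n ?h0 // !mulrS hD IH.
have hz u z : h (u *~ z) = h u *~ z.
  by case: z => k; rewrite ?NegzE ?mulrNz -!pmulrn ?hN hMn.
move=> u; rewrite {1}(row_sum_delta u) (big_morph h hD h0) mulmx_sum_row.
apply: eq_bigr => i _; rewrite -[u 0 i]intz !scaler_int hz; congr (_ *~ _).
by apply/rowP => j; rewrite !mxE.
Qed.


Local Open Scope group_scope.

Lemma conj_comm (G : groupType) (x y : G) : commute x y -> x ^ y = x.
Proof. by move=> cxy; rewrite conjgE cxy mulKg. Qed.

Lemma zpowS (G : groupType) (x : G) (z : int) : zpow x (z + 1)%R = zpow x z * x.
Proof.
case: z => k /=; first by rewrite addn1 expgSr.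
case: k => [|k] /=; first by rewrite mulVg.
by rewrite subn1 /= [x ^+ k.+2]expgS invgM mulgVK.
Qed.

Lemma zpowN (G : groupType) (x : G) (m : nat) : zpow x (- (m%:Z))%R = (x ^+ m)^-1.
Proof. by case: m => [|m] /=; rewrite ?invg1. Qed.

Lemma zpowDn (G : groupType) (x : G) (a : int) (m : nat) :
  zpow x (a + m%:Z)%R = zpow x a * x ^+ m.
Proof.
elim: m => [|m IH]; first by rewrite addr0 mulg1.
by rewrite -addn1 PoszD addrA zpowS IH expgnDr mulgA.
Qed.

Lemma zpowBn (G : groupType) (x : G) (a : int) (m : nat) :
  zpow x (a - m%:Z)%R = zpow x a * (x ^+ m)^-1.
Proof.
elim: m => [|m IH]; first by rewrite subr0 invg1 mulg1.
have -> : (a - (m.+1)%:Z = (a - m%:Z) - 1)%R.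
  by rewrite -addn1 PoszD opprD addrA.
have E := zpowS x (a - m%:Z - 1)%R; rewrite subrK in E.
have E2 : zpow x (a - m%:Z - 1)%R = zpow x (a - m%:Z)%R * x^-1 by rewrite E mulgK.
by rewrite E2 IH expgS invgM mulgA.
Qed.

Lemma zpowD (G : groupType) (x : G) (a b : int) :
  zpow x (a + b)%R = zpow x a * zpow x b.
Proof.
case: b => m; first by rewrite zpowDn.
by rewrite NegzE zpowBn zpowN.
Qed.

Lemma zpowX (G : groupType) (x : G) (d : nat) (z : int) :
  zpow (x ^+ d) z = zpow x (z * d%:Z)%R.
Proof.
case: z => k /=; first by rewrite -expgnA mulnC.
by rewrite NegzE mulNr -PoszM zpowN -expgnA mulnC.
Qed.


Lemma f0 n (G : groupType) (f : 'rV[int]_n -> G) :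
  (forall u v, f (u + v)%R = f u * f v) -> f 0%R = 1.
Proof. by move=> fD; apply: (mulgI (f 0%R)); rewrite -fD addr0 mulg1. Qed.

Lemma fN n (G : groupType) (f : 'rV[int]_n -> G) :
  (forall u v, f (u + v)%R = f u * f v) -> forall u, f (- u)%R = (f u)^-1.
Proof. by move=> fD u; apply: (mulgI (f u)); rewrite -fD subrr mulgV (f0 fD). Qed.

Lemma fMn n (G : groupType) (f : 'rV[int]_n -> G) :
  (forall u v, f (u + v)%R = f u * f v) -> forall u k, f (u *+ k)%R = (f u) ^+ k.
Proof.
move=> fD u; elim=> [|k IH]; first by rewrite mulr0n (f0 fD).
by rewrite mulrSr fD IH expgSr.
Qed.

Lemma fz n (G : groupType) (f : 'rV[int]_n -> G) :
  (forall u v, f (u + v)%R = f u * f v) -> forall u z, zpow (f u) z = f (u *~ z)%R.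
Proof.
move=> fD u [] k /=; first by rewrite -pmulrn (fMn fD).
by rewrite NegzE mulrNz -pmulrn (fN fD) (fMn fD).
Qed.

Definition finv n (G : groupType) (f : 'rV[int]_n -> G) (x : G) : 'rV[int]_n :=
  epsilon (inhabits 0%R) (fun u => x = f u).

Lemma finvK n (G : groupType) (f : 'rV[int]_n -> G) x :
  (exists u, x = f u) -> f (finv f x) = x.
Proof. by move=> h; rewrite /finv -(epsilon_spec (inhabits 0%R) _ h). Qed.

Lemma ffK n (G : groupType) (f : 'rV[int]_n -> G) u :
  injective f -> finv f (f u) = u.
Proof. by move=> finj; apply: finj; rewrite finvK //; exists u. Qed.

Definition cmx n (G : groupType) (f : 'rV[int]_n -> G) (g : G) : 'M[int]_n :=
  \matrix_(i, j) (finv f (f (delta_mx 0 i) ^ g)) 0 j.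

Lemma fJ n (G : groupType) (f : 'rV[int]_n -> G) :
  (forall u v, f (u + v)%R = f u * f v) -> injective f ->
  (forall u g, exists v, f u ^ g = f v) ->
  forall g u, f (u *m cmx f g)%R = f u ^ g.
Proof.
move=> fD finj fnorm g u.
set h := fun u => finv f (f u ^ g).
have hD : forall u v, h (u + v)%R = (h u + h v)%R.
  move=> u1 v1; apply: finj; rewrite /h (finvK (fnorm _ g)) fD.
  by rewrite fD (finvK (fnorm u1 g)) (finvK (fnorm v1 g)) conjMg.
by rewrite /cmx -(additive_mx hD) /h (finvK (fnorm u g)).
Qed.

Lemma sumpow_mx n (C : 'M[int]_n) (u : 'rV[int]_n) r :
  (u *m \sum_(i < r.+1) C ^+ i = (u *m \sum_(i < r) C ^+ i) *m C + u)%R.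
Proof.
rewrite big_ord_recl expr0.
under eq_bigr => i _ do rewrite lift0 exprSr.
by rewrite -mulr_suml mulmxDr -idmxE mulmx1 addrC -mulmxA mulmxE.
Qed.

Lemma powM n (G : groupType) (f : 'rV[int]_n -> G) :
  (forall u v, f (u + v)%R = f u * f v) ->
  forall (a : G) (Ca : 'M[int]_n), (forall u, f (u *m Ca)%R = f u ^ a) ->
  forall u r, (a * f u) ^+ r = a ^+ r * f (u *m \sum_(i < r) Ca ^+ i)%R.
Proof.
move=> fD a Ca hCa u; elim=> [|r IH].
  by rewrite big_ord0 mulmx0 (f0 fD) mulg1.
rewrite expgSr IH sumpow_mx fD hCa expgSr conjgE.
by rewrite !mulgA mulgK.
Qed.

Theorem lemma3p1 (n : nat) (Gamma : groupType) (M : Gamma -> Prop) (delta : nat) :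
  bieberbach n M ->
  cyclic_holonomy_of_order M delta ->
  squarefree delta ->
  exists (N : Gamma -> Prop) (c : Gamma),
    [/\ (* N = M_{n-1} is a ZG-submodule of M, free abelian of rank n-1 *)
        [/\ is_subgroup N, normal_sub N, (forall x, N x -> M x) &
             free_abelian_rank N (n.-1)],
        (* c^delta lies in M and spans a trivial ZG-module *)
        M (c ^+ delta) /\ (forall g, (c ^+ delta) ^ g = c ^+ delta),
        (* M = N (+) <c^delta> (internal direct sum) *)
        (forall x, N x -> cyc (c ^+ delta) x -> x = 1) /\
        (forall m, M m -> exists2 x, N x & exists2 z, cyc (c ^+ delta) z & m = x * z) &
        (* Gamma = N semidirect C with C = <c> (N is normal, see above) *)
        (forall x, N x -> cyc c x -> x = 1) /\
        (forall g, exists2 x, N x & exists2 z, cyc c z & g = x * z)].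
Proof.
move=> [TF [Msub Mab _] Mnorm [f [fD finj fM]] _] [d0 [g [gd gmin gcov]]] sqf.
case: Msub => M1 MM MV.
have Mpow x k : M x -> M (x ^+ k).
  by move=> Mx; elim: k => [|k IH]; rewrite ?expg0 // expgS; apply: MM.
have Mf x : M x -> exists u, x = f u by move/fM.
have fMM u : M (f u) by apply/fM; exists u.
case: n f fD finj fM Mf fMM => [|n'] f fD finj fM Mf fMM.
  have triv1 (x : Gamma) : x = 1.
    have [k Mk] := gcov x; have [u eu] := Mf _ Mk.
    have [u' eu'] := Mf _ gd.
    rewrite (thinmx0 u') (f0 fD) in eu'.
    have g1 : g = 1 := TF g delta d0 eu'.
    by rewrite (thinmx0 u) (f0 fD) g1 expg1n invg1 mul1g in eu.
  have triv (x y : Gamma) : x = y by rewrite (triv1 x) (triv1 y).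
  exists M, 1; split.
  - split; [by split | exact: Mnorm | by [] | by exists f].
  - by split; [rewrite (triv1 (1 ^+ delta)) | move=> y; apply: triv].
  - split=> [x _ _|m Mm]; first exact: triv.
    by exists 1 => //; exists 1; [exists 0%R | apply: triv].
  - split=> [x _ _|y]; first exact: triv.
    by exists 1 => //; exists 1; [exists 0%R | apply: triv].

set n := n'.+1.
have fnorm (u : 'rV[int]_n) (y : Gamma) : exists v, f u ^ y = f v.
  by apply: Mf; apply: Mnorm.
have hJ := fJ fD finj fnorm.
set A := cmx f g.
have MJ (m : Gamma) u : M m -> f u ^ m = f u.
  by move=> Mm; apply: conj_comm; apply: Mab.
have hAk k u : f (u *m A ^+ k)%R = f u ^ (g ^+ k).
  elim: k => [|k IH]; first by rewrite expr0 -idmxE mulmx1 expg0 conjg1.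
  by rewrite exprSr -mulmxE mulmxA hJ IH -conjgM -expgSr.
have hAny (y : Gamma) u : exists k, f u ^ y = f (u *m A ^+ k)%R.
  have [k Mk] := gcov y; exists k.
  by rewrite -[in LHS](mulVKg (g ^+ k) y) conjgM -hAk MJ.
set t := finv f (g ^+ delta).
have ft : f t = g ^+ delta by apply: finvK; apply: Mf.
have tA : (t *m A)%R = t.
  apply: finj; rewrite hJ ft; apply: conj_comm.
  by apply: commute_sym; apply: commuteX; apply: commute_refl.
have tAk k : (t *m A ^+ k)%R = t.
  elim: k => [|k IH]; first by rewrite expr0 -idmxE mulmx1.
  by rewrite exprSr -mulmxE mulmxA IH tA.
have Ad : (A ^+ delta = 1)%R.
  apply/row_matrixP => i; rewrite !rowE; apply: finj.
  by rewrite hAk MJ // -idmxE mulmx1.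
have gmod e : M (g ^+ e) -> (delta %| e)%N.
  move=> Me; have E0 : g ^+ e = (g ^+ delta) ^+ (e %/ delta) * g ^+ (e %% delta).
    by rewrite -expgnA mulnC -expgnDr -divn_eq.
  have E : g ^+ (e %% delta) = ((g ^+ delta) ^+ (e %/ delta))^-1 * g ^+ e.
    by rewrite E0 mulKg.
  have : M (g ^+ (e %% delta)) by rewrite E; apply: MM => //; apply: MV; apply: Mpow.
  case: (posnP (e %% delta)%N) => [/eqP //|e0 Mr].
  by case: (gmin (e %% delta)%N) => //; rewrite e0 ltn_mod.

have S3 (p : nat) : prime p -> (p %| delta)%N ->
    exists phi : 'cV[int]_n, (A *m phi = phi)%R /\ ~~ (p%:Z %| (t *m phi)%R ord0 ord0)%Z.
  move=> pp pd; apply: NNPP => H.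
  have H' (phi : 'cV[int]_n) : (A *m phi = phi)%R -> (p%:Z %| (t *m phi)%R ord0 ord0)%Z.
    by move=> Aphi; apply/negPn/negP => nd; apply: H; exists phi; split.
  set q := (delta %/ p)%N.
  have dq : delta = (q * p)%N by rewrite divnK.
  have p0 : (0 < p)%N := prime_gt0 pp.
  have p1 : (1 < p)%N := prime_gt1 pp.
  have q0 : (0 < q)%N by rewrite -(ltn_pmul2r p0) mul0n -dq.
  have qd : (q < delta)%N by rewrite dq -{1}(muln1 q) ltn_pmul2l.
  have cpq : coprime p q.
    rewrite prime_coprime //; apply/negP => pq.
    by move: (sqf p pp); rewrite dq (dvdn_mul pq (dvdnn p)).
  set C := (A ^+ q)%R.
  have Cp : (C ^+ p = 1)%R by rewrite -exprM -dq Ad.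
  have tC : (t *m C)%R = t := tAk q.
  have hyC (y : 'cV[int]_n) : (C *m y = y)%R -> (p%:Z %| (t *m y)%R ord0 ord0)%Z.
    move=> Cy; set psi := (\sum_(j < q) A ^+ j *m y)%R.
    have Apsi : (A *m psi = psi)%R.
      rewrite /psi mulmx_sumr.
      under eq_bigr => j _ do rewrite mulmxA mulmxE -exprS.
      have e1 : (\sum_(j < q.+1) A ^+ j *m y = y + \sum_(j < q) A ^+ j.+1 *m y)%R.
        by rewrite big_ord_recl expr0 -idmxE mul1mx.
      have e2 : (\sum_(j < q.+1) A ^+ j *m y = \sum_(j < q) A ^+ j *m y + y)%R.
        by rewrite big_ord_recr /= Cy.
      by apply: (@addrI _ y); rewrite -e1 e2 addrC.
    have := H' psi Apsi.
    have -> : ((t *m psi) ord0 ord0 = q%:Z * (t *m y) ord0 ord0)%R.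
      rewrite /psi mulmx_sumr.
      under eq_bigr => j _ do rewrite mulmxA tAk.
      by rewrite sumr_const card_ord mulmxnE -mulr_natl natz.
    by rewrite !dvdzE abszM /= Gauss_dvdr.
  have [w ew] := tate p0 Cp tC hyC.
  set s := g ^+ q.
  have hC u : f (u *m C)%R = f u ^ s := hAk q u.
  have := powM fD hC (- w)%R p.
  rewrite mulNmx -ew !(fN fD) ft -expgnA -dq mulgV => e1.
  have e2 := TF _ _ p0 e1.
  have Ms : M s.
    by rewrite -(invgK s) (mulg1_eq e2) invgK.
  by apply: (gmin q) => //; rewrite q0 qd.

have S4 : exists Phi : 'cV[int]_n,
    [/\ (A *m Phi = Phi)%R, Phi != 0%R & coprime `|((t *m Phi) ord0 ord0)%R|%N delta].
  have [d1|d1] := eqVneq delta 1%N.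
    exists (delta_mx ord0 ord0); split.
    - by move: Ad; rewrite d1 expr1 => ->; rewrite mul1mx.
    - apply/negP => /eqP/matrixP h; have := h ord0 ord0; rewrite !mxE eqxx //.
    - by rewrite d1 coprimen1.
  have d1' : (1 < delta)%N by rewrite ltn_neqAle eq_sym d1 d0.
  pose pick (p : nat) := epsilon (inhabits 0%R)
    (fun phi : 'cV[int]_n => (A *m phi = phi)%R /\ ~~ (p%:Z %| (t *m phi)%R ord0 ord0)%Z).
  have hpick p : prime p -> (p %| delta)%N ->
      (A *m pick p = pick p)%R /\ ~~ (p%:Z %| (t *m pick p)%R ord0 ord0)%Z.
    by move=> pp pd; apply: (epsilon_spec (inhabits 0%R) _ (S3 p pp pd)).
  set Phi := (\sum_(p <- primes delta) (delta %/ p)%N%:Z *: pick p)%R.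
  have APhi : (A *m Phi = Phi)%R.
    rewrite /Phi mulmx_sumr; apply: eq_big_seq => p; rewrite mem_primes => /and3P [pp _ pd].
    by rewrite -scalemxAr (hpick p pp pd).1.
  have aE : ((t *m Phi) ord0 ord0 =
      \sum_(p <- primes delta) (delta %/ p)%N%:Z * (t *m pick p) ord0 ord0)%R.
    rewrite /Phi mulmx_sumr summxE; apply: eq_bigr => p _.
    by rewrite -scalemxAr mxE.
  have hr r : r \in primes delta -> ~~ (r%:Z %| (t *m Phi) ord0 ord0)%Z.
    move=> rin; have := rin; rewrite mem_primes => /and3P [rp _ rd].
    rewrite aE (bigD1_seq r) ?primes_uniq //= rpredDr.
      apply/negP; rewrite !dvdzE abszM /= Gauss_dvdr.
        by apply/negP; exact: (hpick r rp rd).2.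
      rewrite prime_coprime //; apply/negP => rq.
      move: (sqf r rp); rewrite -(divnK rd).
      by rewrite (dvdn_mul rq (dvdnn r)).
    rewrite big_seq_cond; apply: rpred_sum => p /andP [pin pr]; apply: dvdz_mulr.
    move: pin; rewrite mem_primes => /and3P [pp _ pd].
    rewrite dvdzE /= -(Gauss_dvdr _ (_ : coprime r p)).
      by rewrite mulnC divnK.
    by rewrite prime_coprime // dvdn_prime2 // eq_sym.
  have a0 : ((t *m Phi) ord0 ord0)%R != 0%R.
    apply/negP => /eqP a0; have := hr (pdiv delta).
    by rewrite a0 dvdz0 mem_primes pdiv_prime // d0 pdiv_dvd => /(_ isT).
  exists Phi; split => //.
    by apply/negP => /eqP P0; move: a0; rewrite P0 mulmx0 mxE eqxx.
  rewrite coprime_has_primes ?absz_gt0 //; apply/hasPn => r rin.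
  rewrite mem_primes; apply/negP => /and3P [_ _ rd].
  by move: (hr r rin); rewrite dvdzE /= rd.

have [Phi [APhi Phi0 cop]] := S4.
have [L Lu [R Ru [d _ PhiE]]] := int_Smith_normal_form Phi.
set phi : 'cV[int]_n := (L *m delta_mx ord0 ord0)%R.
set kap : int := (d`_0 * R ord0 ord0)%R.
have PhiK : Phi = (kap *: phi)%R.
  rewrite PhiE /phi -mulmxA scalemxAr; congr (L *m _)%R.
  apply/matrixP => i j; rewrite (ord1 j) !mxE big_ord1 !mxE.
  have [->|ne] := eqVneq i ord0; first by rewrite !eqxx mulr1n mulr1.
  by rewrite (_ : (i == ord0 :> nat) = false) ?(negbTE ne) ?mulr0n ?mul0r ?mulr0 //; exact: negbTE ne.
have kap0 : kap != 0%R.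
  by apply/negP => /eqP k0; move: Phi0; rewrite PhiK k0 scale0r eqxx.
have Aphi : (A *m phi = phi)%R.
  apply/matrixP => i j; move/matrixP: APhi => /(_ i j).
  by rewrite PhiK -scalemxAr !mxE => /(mulfI kap0).
set a : int := ((t *m phi) ord0 ord0)%R.
have copa : coprime `|a|%N delta.
  by move: cop; rewrite PhiK -scalemxAr mxE abszM coprimeMl => /andP [].
have phiL (u : 'rV[int]_n) : ((u *m phi) ord0 ord0 = (u *m L) ord0 ord0)%R.
  by rewrite /phi mulmxA -colE mxE.
have Akphi e : (A ^+ e *m phi = phi)%R.
  elim: e => [|e IH]; first by rewrite expr0 -idmxE mul1mx.
  by rewrite exprS -mulmxE -mulmxA IH Aphi.
set A0 : nat := (`|(a %% delta%:Z)%Z|%N + delta)%N.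
have dz : delta%:Z != 0%R by rewrite eqz_nat -lt0n d0.
have A0E : (A0%:Z = (a %% delta%:Z)%Z + delta%:Z)%R.
  by rewrite /A0 PoszD gez0_abs // modz_ge0.
have cpA0 : coprime A0 delta.
  have : coprimez A0%:Z delta%:Z.
    rewrite /coprimez A0E gcdzC gcdzDr gcdzC gcdz_modl.
    by move: copa; rewrite /coprime /gcdz /=.
  by rewrite coprimezE.
have A00 : (0 < A0)%N by rewrite /A0 addn_gt0 d0 orbT.
case: (egcdnP delta A00) => k kn ekA _.
rewrite (eqP cpA0) in ekA.
have k0 : (0 < k)%N.
  by rewrite lt0n; apply/negP => /eqP k0; move: ekA; rewrite k0 mul0n addn1.
have cpk : coprime k delta.
  rewrite /coprime -dvdn1 -(dvdn_addr 1 (dvdn_mull kn (dvdn_gcdr k delta))).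
  by rewrite -ekA dvdn_mulr // dvdn_gcdl.
set beta : int := (- (kn%:Z + k%:Z * ((a %/ delta%:Z)%Z - 1)))%R.
have kab : (k%:Z * a + delta%:Z * beta = 1)%R.
  have ea : a = (A0%:Z + ((a %/ delta%:Z)%Z - 1) * delta%:Z)%R.
    by rewrite A0E {1}(divz_eq a delta%:Z); ring.
  have ek : (k%:Z * A0%:Z = kn%:Z * delta%:Z + 1)%R.
    by rewrite -PoszM ekA PoszD PoszM.
  rewrite /beta; set q0 := (a %/ delta%:Z)%Z; rewrite {1}ea mulrDr ek; ring.

set m0 : 'rV[int]_n := (beta *: (delta_mx ord0 ord0 *m invmx L))%R.
have m0phi : ((m0 *m phi) ord0 ord0 = beta)%R.
  rewrite phiL -scalemxAl -mulmxA mulVmx // mulmx1 !mxE !eqxx mulr1 //.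
set c := g ^+ k * f m0.
set T : 'rV[int]_n := (t *+ k + m0 *m \sum_(i < delta) (A ^+ k) ^+ i)%R.
have hT : c ^+ delta = f T.
  rewrite /c (powM fD (hAk k)) /T fD (fMn fD) ft -!expgnA mulnC //.
have Tphi : ((T *m phi) ord0 ord0 = 1)%R.
  rewrite /T mulmxDl mxE -scaler_nat -scalemxAl mxE -/a.
  rewrite -mulmxA mulmx_suml.
  under eq_bigr => i _ do rewrite -exprM Akphi.
  rewrite sumr_const card_ord -scaler_nat -scalemxAr mxE m0phi.
  by rewrite !natz -kab.
have Rpow (x y : Gamma) r : M (y^-1 * x) -> M ((y ^+ r)^-1 * x ^+ r).
  move=> Mxy; elim: r => [|r IH]; first by rewrite !expg0 invg1 mul1g.
  have -> : (y ^+ r.+1)^-1 * x ^+ r.+1 = ((y ^+ r)^-1 * x ^+ r) ^ y * (y^-1 * x).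
    by rewrite !expgSr invgM conjgE !mulgA mulgK.
  by apply: MM => //; apply: Mnorm.
have Rc : M (c^-1 * g ^+ k).
  by rewrite /c invgM -mulgA mulVg mulg1; apply: MV.
set c1 := c ^+ A0.
have Rg : M (c1^-1 * g).
  have := Rpow _ _ A0 Rc; rewrite -expgnA ekA addn1 expgS -/c1 => H.
  have -> : c1^-1 * g = (c1^-1 * (g * g ^+ (kn * delta))) * (g ^+ (kn * delta))^-1.
    by rewrite mulgA mulgK.
  by apply: MM => //; apply: MV; rewrite mulnC expgnA; apply: Mpow.
have ccov (y : Gamma) : exists r, M ((c ^+ r)^-1 * y).
  have [i Mi] := gcov y; exists (A0 * i)%N.
  rewrite expgnA -/c1 -(mulVKg (g ^+ i) y) mulgA.
  by apply: MM => //; apply: Rpow.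
have cM j : M (c ^+ j) -> (delta %| j)%N.
  move=> Mj.
  have E0 : c ^+ j = (c ^+ delta) ^+ (j %/ delta) * c ^+ (j %% delta).
    by rewrite -expgnA mulnC -expgnDr -divn_eq.
  have Mr : M (c ^+ (j %% delta)%N).
    have -> : c ^+ (j %% delta)%N = ((c ^+ delta) ^+ (j %/ delta))^-1 * c ^+ j.
      by rewrite E0 mulKg.
    by apply: MM => //; apply: MV; apply: Mpow; rewrite hT.
  have Rc' : M ((g ^+ k)^-1 * c) by rewrite /c mulKg.
  have Mg : M (g ^+ (k * (j %% delta))%N).
    have := Rpow _ _ (j %% delta)%N Rc'; rewrite -expgnA => H.
    rewrite -(invgK (g ^+ _)); apply: (MV).
    rewrite -(mulgK (c ^+ (j %% delta)%N) ((g ^+ _)^-1)).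
    apply: (MM); first exact: H.
    exact: (MV _ Mr).
  have := gmod _ Mg; rewrite Gauss_dvdr; last by rewrite coprime_sym.
  case: (posnP (j %% delta)%N) => [/eqP jd _ //|jp].
  move/(dvdn_leq jp); rewrite leqNgt ltn_mod d0 //.

pose N : Gamma -> Prop := fun x => exists u, x = f u /\ ((u *m phi) ord0 ord0 = 0)%R.
have NM x : N x -> M x by case=> u [-> _].
have Nsub : is_subgroup N.
  split.
  - by exists 0%R; rewrite (f0 fD) mul0mx mxE.
  - move=> _ _ [u [-> hu]] [v [-> hv]]; exists (u + v)%R; split; first by rewrite fD.
    by rewrite mulmxDl mxE hu hv addr0.
  - move=> _ [u [-> hu]]; exists (- u)%R; split; first by rewrite (fN fD).
    by rewrite mulNmx mxE hu oppr0.
have Nnorm : normal_sub N.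
  move=> _ y [u [-> hu]]; have [k1 ek] := hAny y u.
  by exists (u *m A ^+ k1)%R; split => //; rewrite -mulmxA Akphi.
have Tz z : (((T *~ z) *m phi) ord0 ord0 = z)%R.
  by rewrite -scaler_int intz -scalemxAl mxE Tphi mulr1.
have dir1 x : N x -> cyc (c ^+ delta) x -> x = 1.
  move=> [u [-> hu]] [z]; rewrite hT (fz fD) => /finj eu.
  by move: hu; rewrite eu Tz => ->; rewrite mulr0z (f0 fD).
have dir2 m : M m -> exists2 x, N x & exists2 z, cyc (c ^+ delta) z & m = x * z.
  move=> /Mf [u ->]; set z := ((u *m phi) ord0 ord0)%R.
  exists (f (u - T *~ z)%R).
    exists (u - T *~ z)%R; split => //.
    have -> : (((u - T *~ z) *m phi) ord0 ord0 = (u *m phi) ord0 ord0 - ((T *~ z) *m phi) ord0 ord0)%R.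
      by rewrite mulmxBl !mxE.
    by rewrite Tz subrr.
  exists (zpow (c ^+ delta) z); first by exists z.
  by rewrite hT (fz fD) -fD subrK.
have dir3 x : N x -> cyc c x -> x = 1.
  move=> Nx [z ez]; apply: dir1 => //.
  have Mz : M (c ^+ `|z|%N).
    move: (NM x Nx); rewrite ez; case: z {ez} => k2 //= /MV; by rewrite invgK.
  have dz' : (delta%:Z %| z)%Z by rewrite dvdzE /=; apply: cM.
  exists (z %/ delta%:Z)%Z; rewrite ez zpowX divzK //.
exists N, c; split.
- split => //.
  exists (fun w : 'rV[int]_n' => f ((\row_j (oapp (fun i => w ord0 i) 0%R (unlift ord0 j))) *m invmx L)%R).
  split.
  + move=> w1 w2; rewrite -fD -mulmxDl; congr (f (_ *m _)); apply/rowP => j.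
    by rewrite !mxE; case: unlift => [i|] /=; rewrite ?mxE ?addr0.
  + move=> w1 w2 /finj /(congr1 (fun v => v *m L)%R); rewrite -!mulmxA mulVmx // !mulmx1.
    move/rowP => E; apply/rowP => i; have := E (lift ord0 i); rewrite !mxE liftK //= ?(ord1 i).
  + move=> x; split.
    * move=> [u [-> hu]]; exists (\row_i (u *m L)%R ord0 (lift ord0 i)); congr f.
      have -> : (\row_j oapp (fun i => (\row_i (u *m L)%R ord0 (lift ord0 i)) ord0 i) 0%R (unlift ord0 j) = u *m L)%R.
        apply/rowP => j; rewrite mxE; case: unliftP => [i ->|->] /=; first by rewrite mxE.
        by rewrite -phiL hu.
      by rewrite -mulmxA mulmxV // mulmx1.
    * move=> [w ->]; eexists; split; first by [].
      by rewrite phiL -mulmxA mulVmx // mulmx1 mxE unlift_none.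
- split; first by rewrite hT.
  move=> y; have [r Mr] := ccov y.
  rewrite -(mulVKg (c ^+ r) y) conjgM (@conj_comm _ (c ^+ delta) (c ^+ r)).
    by rewrite hT MJ.
  by apply: commuteX2; apply: commute_refl.
- by split.
- split => // y; have [r Mr] := ccov y.
  have [x1 Nx1 [z1 [z' ez'] e1]] := dir2 _ Mr.
  exists (x1 ^ (c ^+ r)^-1); first exact: Nnorm.
  exists (c ^+ r * z1).
    by exists (r%:Z + z' * delta%:Z)%R; rewrite zpowD ez' zpowX.
  by rewrite mulgA -conjgCV -mulgA -e1 mulVKg.
Qed.
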